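(* Given a word $w\in\Sigma^n$ (with $\Sigma=\{1,\dots,\sigma\}$), the next element graph $\mathrm{NEG}(w)$ can be constructed in $O(n\sigma)$ time.
   Context: Words are finite sequences over $\Sigma=\{1,\dots,\sigma\}$ with the usual order, $\Sigma$ being the set of letters of $w$. $P_w[i,x]$ denotes the largest $i'\le i$ with $w[i']=x$. The next element graph $\mathrm{NEG}(w)$ is the directed, edge-labelled graph with vertices $v_1,\dots,v_n$ (vertex $v_i$ representing position $i$) whose edges are pairs $(v_i,v_j)$ with $i<j$ carrying a label in $\{\uparrow,\rightarrow,\downarrow\}$ as follows: label $\uparrow$ if $w[i]<w[j]$ and for all $j'\in[i+1,j-1]$, $w[i]>w[j']$ or $w[j']>w[j]$; label $\rightarrow$ if $w[i]=w[j]$ and $i=P_w[j-1,w[j]]$; label $\downarrow$ if $w[i]>w[j]$ and for all $j'\in[i+1,j-1]$, $w[i]<w[j']$ or $w[j']<w[j]$. Model: word RAM with logarithmic word size. *)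

(* Defs.v *)
From mathcomp Require Import all_boot.
Set Implicit Arguments. Unset Strict Implicit. Unset Printing Implicit Defensive.

(* A word is a seq nat; positions are 1-indexed: w[i] = nth 0 w (i-1). *)
Definition wat (w : seq nat) (i : nat) : nat := nth 0 w i.-1.

(* P_w[i,x] = largest i' <= i (i' >= 1) with w[i'] = x (0 if none). *)
Definition Pw (w : seq nat) (i x : nat) : nat :=
  \max_(i' < i.+1 | (0 < (i' : nat)) && (wat w i' == x)) (i' : nat).

Inductive label := Up | Right | Down.

Definition neg_edge (w : seq nat) (i j : nat) (l : label) : Prop :=
  [/\ 1 <= i, i < j, j <= size w &
   match l with
   | Up => wat w i < wat w j /\
           forall j', i < j' < j -> (wat w j' < wat w i) \/ (wat w j < wat w j')
   | Right => wat w i = wat w j /\ i = Pw w j.-1 (wat w j)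
   | Down => wat w j < wat w i /\
           forall j', i < j' < j -> (wat w i < wat w j') \/ (wat w j' < wat w j)
   end].

Definition label_code (l : label) : nat :=
  match l with Up => 0 | Right => 1 | Down => 2 end.

(* Registers r_0, r_1, ... and memory cells hold natural numbers bounded by a
   word bound B (word size log B); every instruction costs one step. *)
Inductive instr :=
| IConst (r v : nat)
| IAdd (r a b : nat)
| ISub (r a b : nat)          (* r := a - b (truncated) *)
| IMul (r a b : nat)
| IDiv (r a b : nat)
| IMod (r a b : nat)
| ILoad (r a : nat)
| IStore (a b : nat)
| IJz (a l : nat)
| IJlt (a b l : nat)
| IHalt.

Record config := Cfg { pc : nat; regs : nat -> nat; mem : nat -> nat }.

Inductive outcome := Halted | Next of config | Fault.

Definition upd (f : nat -> nat) (a v : nat) : nat -> nat :=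
  fun x => if x == a then v else f x.

Definition step (P : seq instr) (B : nat) (c : config) : outcome :=
  let: Cfg p R M := c in
  let set r v := if v <= B then Next (Cfg p.+1 (upd R r v) M) else Fault in
  if p < size P then
    match nth IHalt P p with
    | IConst r v => set r v
    | IAdd r a b => set r (R a + R b)
    | ISub r a b => set r (R a - R b)
    | IMul r a b => set r (R a * R b)
    | IDiv r a b => if R b == 0 then Fault else set r (R a %/ R b)
    | IMod r a b => if R b == 0 then Fault else set r (R a %% R b)
    | ILoad r a => set r (M (R a))
    | IStore a b => Next (Cfg p.+1 R (upd M (R a) (R b)))
    | IJz a l => Next (Cfg (if R a == 0 then l else p.+1) R M)
    | IJlt a b l => Next (Cfg (if R a < R b then l else p.+1) R M)
    | IHalt => Halted
    end
  else Fault.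

Fixpoint run (P : seq instr) (B t : nat) (c : config) : option config :=
  match t with
  | 0 => None
  | t'.+1 => match step P B c with
             | Halted => Some c
             | Next c' => run P B t' c'
             | Fault => None
             end
  end.

(* Input encoding: M[0] = n, M[1] = sigma, M[2 + (i-1)] = w[i]; all else 0. *)
Definition init_cfg (w : seq nat) (sigma : nat) : config :=
  Cfg 0 (fun _ => 0)
      (fun a => if a == 0 then size w else if a == 1 then sigma
                else if a < (size w).+2 then nth 0 w (a - 2) else 0).

(* Output encoding: r_0 = base, M[base] = m (number of edges), and edge k < m
   is the triple (M[base+1+3k], M[base+2+3k], M[base+3+3k]) = (i, j, code). *)
Definition out_triple (c : config) (k : nat) : nat * nat * nat :=
  let b := regs c 0 in
  (mem c (b + 1 + 3 * k), mem c (b + 2 + 3 * k), mem c (b + 3 + 3 * k)).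

Definition outputs_NEG (w : seq nat) (c : config) : Prop :=
  let m := mem c (regs c 0) in
  (forall k, k < m -> exists i j l,
      out_triple c k = (i, j, label_code l) /\ neg_edge w i j l) /\
  (forall i j l, neg_edge w i j l ->
      exists2 k, k < m & out_triple c k = (i, j, label_code l)).

(* Main.v *)
Require Import Defs.
From mathcomp Require Import all_boot zify.
Set Implicit Arguments. Unset Strict Implicit. Unset Printing Implicit Defensive.

Section Math.
Variable w : seq nat.

Lemma Pw0 x : Pw w 0 x = 0.
Proof. by rewrite /Pw big_mkcond big_ord_recr big_ord0 /=. Qed.

Lemma PwS i x : Pw w i.+1 x = if wat w i.+1 == x then i.+1 else Pw w i x.
Proof.
rewrite /Pw big_mkcond big_ord_recr /=.
case: eqP => _ //=; last by rewrite maxn0 -big_mkcond.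
apply/maxn_idPr; apply/bigmax_leqP => k _; case: ifP => _ //; have := ltn_ord k; simpl; lia.
Qed.

Lemma Pw_le i x : Pw w i x <= i.
Proof. elim: i => [|i IH]; rewrite ?Pw0 // PwS; case: eqP => _; lia. Qed.

Lemma Pw_ge i j x : 1 <= j <= i -> wat w j = x -> j <= Pw w i x.
Proof.
elim: i => [|i IH]; first lia.
move=> Hj Hx; rewrite PwS; case: eqP => E; first lia.
have Hji : j != i.+1 by apply/eqP => Ej; apply E; rewrite -Ej.
apply IH => //; lia.
Qed.

Lemma Pw_at i x : 1 <= Pw w i x -> wat w (Pw w i x) = x.
Proof.
elim: i => [|i IH]; rewrite ?Pw0 // PwS; case: eqP => //.
Qed.

End Math.


Section Math2.
Variable w : seq nat.

Lemma interval i j lo hi : 1 <= i < j ->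
 (forall j', i < j' < j -> ~~ (lo <= wat w j' <= hi)) <->
 (forall y, lo <= y <= hi -> Pw w j.-1 y <= i).
Proof.
move=> Hij; split.
- move=> H y Hy; rewrite leqNgt; apply/negP => Hlt.
  have Hat := Pw_at (ltn_trans (leq_ltn_trans (leq0n _) (proj1 (andP Hij))) Hlt).
  have := H (Pw w j.-1 y); rewrite Hat Hy => /(_ _) /negP; apply => //.
  have := Pw_le w j.-1 y; lia.
- move=> H j' Hj'; apply/negP => Hv.
  have := H _ Hv; have := Pw_ge (w:=w) (i:=j.-1) (j:=j') (x:=wat w j').
  move=> /(_ _ erefl) Hg; have : 1 <= j' <= j.-1 by lia.
  move/Hg; lia.
Qed.

Lemma gen_sound j x lo hi mm : 1 <= j -> lo <= x <= hi ->
  (forall y, lo <= y <= hi -> y != x -> Pw w j.-1 y <= mm) ->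
  mm < Pw w j.-1 x ->
  [/\ 1 <= Pw w j.-1 x, Pw w j.-1 x < j, wat w (Pw w j.-1 x) = x &
   forall j', Pw w j.-1 x < j' < j -> ~~ (lo <= wat w j' <= hi)].
Proof.
move=> Hj Hx Hmm Hlt.
have H1 : 1 <= Pw w j.-1 x by lia.
have H2 : Pw w j.-1 x < j by have := Pw_le w j.-1 x; lia.
split => //; first exact: Pw_at.
apply/(interval (i:=Pw w j.-1 x)); first lia.
move=> y Hy; case: (eqVneq y x) => [->//|Hne].
have := Hmm y Hy Hne; lia.
Qed.

Lemma gen_complete i j x lo hi mm : 1 <= i < j -> wat w i = x -> lo <= x <= hi ->
  (forall j', i < j' < j -> ~~ (lo <= wat w j' <= hi)) ->
  (mm = 0 \/ exists2 y, (lo <= y <= hi) && (y != x) & Pw w j.-1 y = mm) ->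
  i = Pw w j.-1 x /\ mm < i.
Proof.
move=> Hij Hx Hlh H Hmm.
have Hle := proj1 (interval _ _ Hij) H.
have Hi : i = Pw w j.-1 x.
  apply/eqP; rewrite eqn_leq Hle // andbT.
  apply: Pw_ge => //; lia.
split => //; case: Hmm => [->|[y /andP[Hy Hne] <-]]; first lia.
have := Hle y Hy; rewrite leq_eqVlt => /orP[/eqP E|//].
have : 1 <= Pw w j.-1 y by lia.
move/Pw_at; rewrite E Hx => E'; by rewrite E' eqxx in Hne.
Qed.

End Math2.


Definition exec (ins : instr) (B : nat) (c : config) : outcome :=
  let: Cfg p R M := c in
  let set r v := if v <= B then Next (Cfg p.+1 (upd R r v) M) else Fault in
    match ins with
    | IConst r v => set r v
    | IAdd r a b => set r (R a + R b)
    | ISub r a b => set r (R a - R b)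
    | IMul r a b => set r (R a * R b)
    | IDiv r a b => if R b == 0 then Fault else set r (R a %/ R b)
    | IMod r a b => if R b == 0 then Fault else set r (R a %% R b)
    | ILoad r a => set r (M (R a))
    | IStore a b => Next (Cfg p.+1 R (upd M (R a) (R b)))
    | IJz a l => Next (Cfg (if R a == 0 then l else p.+1) R M)
    | IJlt a b l => Next (Cfg (if R a < R b then l else p.+1) R M)
    | IHalt => Halted
    end.

Lemma step_eq P B p R M : p < size P ->
  step P B (Cfg p R M) = exec (nth IHalt P p) B (Cfg p R M).
Proof. by rewrite /step => ->. Qed.

Definition Runs P B t c (Q : config -> Prop) :=
  forall T, t <= T -> exists cfg, run P B T c = Some cfg /\ Q cfg.

Lemma runs_mono P B t t' c Q : t <= t' -> Runs P B t c Q -> Runs P B t' c Q.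
Proof. move=> H1 H T HT; apply: H; exact: leq_trans HT. Qed.

Lemma runs_stepI P B t p R M Q ins : nth IHalt P p = ins -> p < size P ->
  match exec ins B (Cfg p R M) with Next c' => Runs P B t c' Q | Halted => t = 0 /\ Q (Cfg p R M) | Fault => False end ->
  Runs P B t.+1 (Cfg p R M) Q.
Proof.
move=> Hi Hp H [|T] HT //.
have -> : run P B T.+1 (Cfg p R M) = match step P B (Cfg p R M) with
  Halted => Some (Cfg p R M) | Next c' => run P B T c' | Fault => None end by [].
rewrite step_eq // Hi.
case: (exec ins B (Cfg p R M)) H => // [[_ HQ]|c' H]; first by exists (Cfg p R M).
exact: H.
Qed.

Definition prog : seq instr := [::
 IConst 12 1; ILoad 1 15; ILoad 2 12; IConst 13 2; IAdd 9 1 13;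
 IAdd 0 9 2; IAdd 0 0 12; IAdd 8 0 12; IConst 3 1;
 (* 9 OUTER *) IJlt 1 3 63; IAdd 10 3 12; ILoad 4 10; IAdd 10 9 4; ILoad 11 10;
 IJz 11 22;
 IStore 8 11; IAdd 10 8 12; IStore 10 3; IAdd 10 10 12; IStore 10 12; IAdd 8 10 12; IAdd 7 7 12;
 (* 22 *) IAdd 6 11 15; ISub 5 4 12;
 (* 24 UPLOOP *) IJz 5 40; IAdd 10 9 5; ILoad 11 10; IJlt 6 11 30; ISub 5 5 12; IJz 15 24;
 (* 30 *) IStore 8 11; IAdd 10 8 12; IStore 10 3; IAdd 10 10 12; IStore 10 15; IAdd 8 10 12; IAdd 7 7 12;
 IAdd 6 11 15; ISub 5 5 12; IJz 15 24;
 (* 40 UPEND *) IAdd 10 9 4; ILoad 6 10; IAdd 5 4 12;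
 (* 43 DOWNLOOP *) IJlt 2 5 59; IAdd 10 9 5; ILoad 11 10; IJlt 6 11 49; IAdd 5 5 12; IJz 15 43;
 (* 49 *) IStore 8 11; IAdd 10 8 12; IStore 10 3; IAdd 10 10 12; IStore 10 13; IAdd 8 10 12; IAdd 7 7 12;
 IAdd 6 11 15; IAdd 5 5 12; IJz 15 43;
 (* 59 DOWNEND *) IAdd 10 9 4; IStore 10 3; IAdd 3 3 12; IJz 15 9;
 (* 63 END *) IStore 0 7; IHalt ].

Lemma size_prog : size prog = 65. Proof. by []. Qed.

Lemma updE f a v x : upd f a v x = if x == a then v else f x. Proof. by []. Qed.

Ltac stp := apply: runs_stepI; [ cbv [nth prog]; reflexivity | by [] | cbn [exec] ].




Section Main.
Variables (w : seq nat) (sigma B : nat).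
Hypothesis Hw1 : forall x, x \in w -> 1 <= x <= sigma.
Hypothesis Hw2 : forall x, 1 <= x <= sigma -> x \in w.
Local Notation n := (size w).
Hypothesis HB : 4 * (n + 2) * (n + 2) <= B.

Local Notation base := (n + sigma + 3).

Lemma sig_le_n : sigma <= n.
Proof.
have -> : sigma = size (iota 1 sigma) by rewrite size_iota.
apply: uniq_leq_size; first exact: iota_uniq.
move=> x; rewrite mem_iota => Hx; apply: Hw2; lia.
Qed.

Lemma wat_bnd j : 1 <= j <= n -> 1 <= wat w j <= sigma.
Proof. move=> Hj; apply: Hw1; rewrite /wat; have Hs : j.-1 < size w by lia. exact: mem_nth Hs. Qed.

Lemma mB m : m <= n * sigma + n -> base + 4 + 3 * m <= B.
Proof. have := sig_le_n; move: HB; nia. Qed.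

Definition init_mem := Defs.mem (init_cfg w sigma).
Definition MemIn (M : nat -> nat) := forall a, a < n.+2 -> M a = init_mem a.
Definition MemLast (M : nat -> nat) j :=
  forall x, 1 <= x <= sigma -> M (n + 2 + x) = Pw w j.-1 x.
Definition trip (M : nat -> nat) k :=
  (M (base + 1 + 3 * k), M (base + 2 + 3 * k), M (base + 3 + 3 * k)).
Definition OutInv M m (D : nat -> nat -> label -> Prop) :=
  (forall k, k < m -> exists i j l, trip M k = (i, j, label_code l) /\ neg_edge w i j l) /\
  (forall i j l, neg_edge w i j l -> D i j l -> exists2 k, k < m & trip M k = (i, j, label_code l)).

Lemma MemIn_upd M a v : MemIn M -> n.+2 <= a -> MemIn (upd M a v).
Proof. move=> H Ha b Hb; rewrite updE; case: eqP => [E|_]; [lia|exact: H]. Qed.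

Lemma MemLast_upd M j a v : MemLast M j -> base <= a -> MemLast (upd M a v) j.
Proof. move=> H Ha x Hx; rewrite updE; case: eqP => [E|_]; [lia|exact: H]. Qed.

Lemma OutInv_upd M m D a v : OutInv M m D -> a <= base -> OutInv (upd M a v) m D.
Proof.
move=> H Ha.
have E : forall k, trip (upd M a v) k = trip M k.
  by move=> k; rewrite /trip !updE; do 3 (case: eqP => [?|_]; first lia).
split => [k Hk|i j l Hn HD]; first by rewrite E; apply: H.1.
by have [k Hk Ek] := H.2 i j l Hn HD; exists k; rewrite ?E.
Qed.

Lemma OutInv_weak M m D D' : OutInv M m D ->
  (forall i j l, neg_edge w i j l -> D' i j l -> D i j l) -> OutInv M m D'.
Proof. by move=> [H1 H2] HD; split => // i j l Hn /(HD _ _ _ Hn); apply: H2. Qed.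

Lemma OutInv_emit M m D i j l a1 a2 a3 : OutInv M m D -> neg_edge w i j l ->
  a1 = base + 1 + 3 * m -> a2 = a1 + 1 -> a3 = a2 + 1 ->
  OutInv (upd (upd (upd M a1 i) a2 j) a3 (label_code l)) m.+1
    (fun a b c => D a b c \/ [/\ a = i, b = j & c = l]).
Proof.
move=> [H1 H2] Hn E1 E2 E3.
have Eold : forall k, k < m -> trip (upd (upd (upd M a1 i) a2 j) a3 (label_code l)) k = trip M k.
  by move=> k Hk; rewrite /trip !updE; repeat (case: eqP => ?; first lia).
have Enew : trip (upd (upd (upd M a1 i) a2 j) a3 (label_code l)) m = (i, j, label_code l).
  rewrite /trip !updE; repeat (case: eqP => ?; try lia); done.
split.
- move=> k; rewrite ltnS leq_eqVlt => /orP[/eqP->|Hk]; first by exists i, j, l.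
  by rewrite Eold //; apply: H1.
- move=> a b c Hab [/(H2 _ _ _ Hab) [k Hk Ek]|[-> -> ->]].
  + by exists k; [lia | rewrite Eold].
  + by exists m.
Qed.

Lemma MemLast_next M j : MemLast M j -> 1 <= j <= n ->
  MemLast (upd M (n + 2 + wat w j) j) j.+1.
Proof.
move=> H Hj x Hx; rewrite updE /= -[j in Pw w j](prednK (_ : 0 < j)) ?PwS ?prednK; try lia.
have := wat_bnd Hj.
case: eqP => [E|NE]; case: eqP => [E'|NE'] => //; try lia.
- by move=> _; rewrite H.
Qed.


Definition Dup j x := fun (i j' : nat) (l : label) =>
  j' < j \/ (j' = j /\ (l = Right \/ (l = Up /\ x < wat w i))).
Definition Ddown j x := fun (i j' : nat) (l : label) =>
  j' < j \/ (j' = j /\ (l = Right \/ l = Up \/ (l = Down /\ wat w i < x))).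

Lemma right_edge j : 1 <= j <= n -> 1 <= Pw w j.-1 (wat w j) ->
  neg_edge w (Pw w j.-1 (wat w j)) j Right.
Proof.
move=> Hj H; have := Pw_le w j.-1 (wat w j); have := Pw_at H => E Hle.
split => //; lia.
Qed.

Lemma right_none M m j : Pw w j.-1 (wat w j) = 0 ->
  OutInv M m (fun _ j' _ => j' < j) -> OutInv M m (Dup j (wat w j).-1).
Proof.
move=> H0 HO; apply: (OutInv_weak HO) => i j' l [H1 H2 H3 Hl] [//|[E [El|[El Hx]]]]; subst.
- by case: Hl => _ E; move: H1; rewrite E H0.
- by case: Hl => Hlt _; lia.
Qed.

Lemma right_after M m j : OutInv M m (fun a b c => b < j \/ [/\ a = Pw w j.-1 (wat w j), b = j & c = Right]) ->
  OutInv M m (Dup j (wat w j).-1).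
Proof.
move=> HO; apply: (OutInv_weak HO) => i j' l [H1 H2 H3 Hl] [|[E [El|[El Hx]]]]; [by left| |]; subst.
- by case: Hl => _ E; right.
- by case: Hl => Hlt _; lia.
Qed.

Lemma up_edge j x mm : 1 <= j <= n -> 1 <= x < wat w j ->
  (forall y, x < y <= wat w j -> Pw w j.-1 y <= mm) -> mm < Pw w j.-1 x ->
  neg_edge w (Pw w j.-1 x) j Up.
Proof.
move=> Hj Hx Hmm Hlt.
have Hj1 : 1 <= j by lia.
have Hx1 : x <= x <= wat w j by lia.
have Hmm' : forall y, x <= y <= wat w j -> y != x -> Pw w j.-1 y <= mm.
  move=> y Hy Hne; apply: Hmm; lia.
have [H1 H2 H3 H4] := gen_sound Hj1 Hx1 Hmm' Hlt.
split => //; first lia; rewrite H3; split; first lia; move=> j' /H4; lia.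
Qed.

Lemma up_emit_trans M m j x : 1 <= x ->
  OutInv M m (fun a b c => Dup j x a b c \/ [/\ a = Pw w j.-1 x, b = j & c = Up]) ->
  OutInv M m (Dup j x.-1).
Proof.
move=> Hx HO; apply: (OutInv_weak HO) => i j' l [H1 H2 H3 Hl] [|[E [El|[El Hxi]]]].
- by left; left.
- by left; right; split => //; left.
subst j' l; case: (ltnP x (wat w i)) => Hxi'.
  by left; right; split => //; right.
case: Hl => Hup Hbet.
have Hij : 1 <= i < j by lia.
have Hwi : wat w i = x by lia.
have Hlh : x <= x <= wat w j by lia.
have Hb : forall j', i < j' < j -> ~~ (x <= wat w j' <= wat w j).
  by move=> j' /Hbet; lia.
have Hm : 0 = 0 \/ exists2 y, (x <= y <= wat w j) && (y != x) & Pw w j.-1 y = 0 by left.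
have [-> _] := gen_complete Hij Hwi Hlh Hb Hm.
by right.
Qed.

Lemma up_noemit_trans M m j x mm : 1 <= x ->
  (mm = 0 \/ exists2 y, x < y <= wat w j & Pw w j.-1 y = mm) ->
  Pw w j.-1 x <= mm ->
  OutInv M m (Dup j x) -> OutInv M m (Dup j x.-1).
Proof.
move=> Hx Hmm Hno HO; apply: (OutInv_weak HO) => i j' l [H1 H2 H3 Hl] [|[E [El|[El Hxi]]]].
- by left.
- by right; split => //; left.
subst j' l; case: (ltnP x (wat w i)) => Hxi'.
  by right; split => //; right.
case: Hl => Hup Hbet.
have Hij : 1 <= i < j by lia.
have Hwi : wat w i = x by lia.
have Hlh : x <= x <= wat w j by lia.
have Hb : forall j', i < j' < j -> ~~ (x <= wat w j' <= wat w j).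
  by move=> j' /Hbet; lia.
have Hm : mm = 0 \/ exists2 y, (x <= y <= wat w j) && (y != x) & Pw w j.-1 y = mm.
  case: Hmm => [->|[y Hy E]]; [by left | right; exists y => //; apply/andP; split; lia].
have [E1 E2] := gen_complete Hij Hwi Hlh Hb Hm.
lia.
Qed.

Lemma up_to_down M m j : 1 <= j <= n -> OutInv M m (Dup j 0) -> OutInv M m (Ddown j (wat w j).+1).
Proof.
move=> Hj HO; apply: (OutInv_weak HO) => i j' l [H1 H2 H3 Hl] [|[E [El|[El|[El Hxi]]]]].
- by left.
- by right; split => //; left.
- subst; right; split => //; right; split => //.
  have := @wat_bnd i; lia.
- by subst; case: Hl; lia.
Qed.

Lemma down_edge j x mm : 1 <= j <= n -> wat w j < x <= sigma ->
  (forall y, wat w j <= y < x -> Pw w j.-1 y <= mm) -> mm < Pw w j.-1 x ->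
  neg_edge w (Pw w j.-1 x) j Down.
Proof.
move=> Hj Hx Hmm Hlt.
have Hj1 : 1 <= j by lia.
have Hx1 : wat w j <= x <= x by lia.
have Hmm' : forall y, wat w j <= y <= x -> y != x -> Pw w j.-1 y <= mm.
  move=> y Hy Hne; apply: Hmm; lia.
have [H1 H2 H3 H4] := gen_sound Hj1 Hx1 Hmm' Hlt.
split => //; first lia; rewrite H3; split; first lia; move=> j' /H4; lia.
Qed.

Lemma down_emit_trans M m j x :
  OutInv M m (fun a b c => Ddown j x a b c \/ [/\ a = Pw w j.-1 x, b = j & c = Down]) ->
  OutInv M m (Ddown j x.+1).
Proof.
move=> HO; apply: (OutInv_weak HO) => i j' l [H1 H2 H3 Hl] [|[E [El|[El|[El Hxi]]]]].
- by left; left.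
- by left; right; split => //; left.
- by left; right; split => //; right; left.
subst j' l; case: (ltnP (wat w i) x) => Hxi'.
  by left; right; split => //; right; right.
case: Hl => Hup Hbet.
have Hij : 1 <= i < j by lia.
have Hwi : wat w i = x by lia.
have Hlh : wat w j <= x <= x by lia.
have Hb : forall j', i < j' < j -> ~~ (wat w j <= wat w j' <= x).
  by move=> j' /Hbet; lia.
have Hm : 0 = 0 \/ exists2 y, (wat w j <= y <= x) && (y != x) & Pw w j.-1 y = 0 by left.
have [-> _] := gen_complete Hij Hwi Hlh Hb Hm.
by right.
Qed.

Lemma down_noemit_trans M m j x mm :
  (mm = 0 \/ exists2 y, wat w j <= y < x & Pw w j.-1 y = mm) ->
  Pw w j.-1 x <= mm ->
  OutInv M m (Ddown j x) -> OutInv M m (Ddown j x.+1).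
Proof.
move=> Hmm Hno HO; apply: (OutInv_weak HO) => i j' l [H1 H2 H3 Hl] [|[E [El|[El|[El Hxi]]]]].
- by left.
- by right; split => //; left.
- by right; split => //; right; left.
subst j' l; case: (ltnP (wat w i) x) => Hxi'.
  by right; split => //; right; right.
case: Hl => Hup Hbet.
have Hij : 1 <= i < j by lia.
have Hwi : wat w i = x by lia.
have Hlh : wat w j <= x <= x by lia.
have Hb : forall j', i < j' < j -> ~~ (wat w j <= wat w j' <= x).
  by move=> j' /Hbet; lia.
have Hm : mm = 0 \/ exists2 y, (wat w j <= y <= x) && (y != x) & Pw w j.-1 y = mm.
  case: Hmm => [->|[y Hy E]]; [by left | right; exists y => //; apply/andP; split; lia].
have [E1 E2] := gen_complete Hij Hwi Hlh Hb Hm.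
lia.
Qed.

Lemma down_end M m j : OutInv M m (Ddown j sigma.+1) -> OutInv M m (fun _ b _ => b < j.+1).
Proof.
move=> HO; apply: (OutInv_weak HO) => i j' l [H1 H2 H3 Hl] Hj.
case: (ltnP j' j) => Hjj; [by left | right; split; first lia].
case: l Hl => [_|_|[Hd _]]; [by right; left | by left | right; right; split => //].
have := @wat_bnd i; lia.
Qed.


Definition BaseR (R : nat -> nat) :=
  [/\ R 0 = base, R 1 = n, R 2 = sigma, R 9 = n + 2 & [/\ R 12 = 1, R 13 = 2 & R 15 = 0]].

Lemma BaseR_upd R r v : BaseR R -> r \notin [:: 0; 1; 2; 9; 12; 13; 15] -> BaseR (upd R r v).
Proof.
case=> r0 r1 r2 r9 [r12 r13 r15]; rewrite !inE => Hr.
by split; [ | | | | split]; rewrite updE; case: eqP => // E; subst; move: Hr.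
Qed.

Local Notation Q := (outputs_NEG w).

Ltac rw := repeat match goal with H : ?R ?k = _ |- context[?R ?k] => is_var R; rewrite H end.
Ltac st := apply: runs_stepI; [ cbv [nth prog]; reflexivity | by [] | cbn [exec]; rewrite ?updE /=; rw; rewrite /= ].
Ltac bnd := rewrite ifT; last lia.
Ltac baseR := repeat (apply: BaseR_upd; last by []); assumption.

Lemma end_ok R M m : BaseR R -> R 7 = m -> OutInv M m (fun _ b _ => b < n.+1) ->
  Runs prog B 2 (Cfg 63 R M) Q.
Proof.
case=> r0 r1 r2 r9 [r12 r13 r15] r7 HO.
st; rw.
st; split => //.
have [H1 H2] := OutInv_upd m HO (leqnn base).
rewrite /outputs_NEG /out_triple /= r0 updE eqxx; split.
- move=> k Hk; have [i [j [l [E Hn]]]] := H1 k Hk; exists i, j, l; split => //.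
- move=> i j l Hn; have Hj : j < n.+1 by case: Hn; lia.
  by have [k Hk E] := H2 i j l Hn Hj; exists k.
Qed.


Lemma up_loop j K : 1 <= j <= n ->
  (forall R M m, BaseR R -> R 3 = j -> R 4 = wat w j -> R 7 = m -> R 8 = base + 1 + 3 * m ->
     MemIn M -> MemLast M j -> OutInv M m (Dup j 0) -> m <= j.-1 * sigma.+1 + wat w j ->
     Runs prog B K (Cfg 40 R M) Q) ->
  forall x R M m mm, BaseR R -> R 3 = j -> R 4 = wat w j -> R 5 = x -> R 6 = mm -> R 7 = m ->
     R 8 = base + 1 + 3 * m -> x < wat w j -> MemIn M -> MemLast M j -> OutInv M m (Dup j x) ->
     (forall y, x < y <= wat w j -> Pw w j.-1 y <= mm) ->
     (mm = 0 \/ exists2 y, x < y <= wat w j & Pw w j.-1 y = mm) ->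
     m + x <= j.-1 * sigma.+1 + wat w j ->
     Runs prog B (x * 20 + K.+1) (Cfg 24 R M) Q.
Proof.
move=> Hj Hc; elim=> [|x IH] R M m mm BR r3 r4 r5 r6 r7 r8 Hx HMI HML HO Hmm1 Hmm2 Hm.
  rewrite mul0n add0n; st; apply: (Hc _ _ m) => //; lia.
have Hwj := wat_bnd Hj.
have Hsn := sig_le_n.
have HmB : base + 4 + 3 * m <= B.
  apply: mB; have : j.-1 * sigma.+1 <= n.-1 * sigma.+1 by apply: leq_mul => //; lia.
  nia.
have Hmmn : mm <= n.
  case: Hmm2 => [->//|[y _ <-]]; have := Pw_le w j.-1 y; lia.
have Hpw := Pw_le w j.-1 x.+1.
case: (BR) => r0 r1 r2 r9 [r12 r13 r15].
rewrite (_ : x.+1 * 20 + K.+1 = 14 + (6 + (x * 20 + K.+1))); last lia.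
st. st; bnd. st; rewrite HML; last lia. bnd.
st; case: ltnP => Hlt.
-
  st. st; bnd. st. st; bnd. st. st; bnd. st; bnd. st; bnd. st; bnd. st.
  apply: runs_mono; last apply: (IH _ _ m.+1 (Pw w j.-1 x.+1)).
  all: try (rewrite ?updE /=; lia).
  + by baseR.
  + do 3 (apply: MemIn_upd; last lia); done.
  + do 3 (apply: MemLast_upd; last lia); done.
  + apply: (up_emit_trans (x := x.+1)); first lia.
    apply: (OutInv_emit (l := Up)) => //; try lia.
    apply: (up_edge (mm := mm)) => //; lia.
  + move=> y Hy; case: (eqVneq y x.+1) => [->//|Hne].
    have := Hmm1 y; lia.
  + by right; exists x.+1 => //; lia.
-
  st; bnd. st.
  apply: runs_mono; last apply: (IH _ _ m mm).
  all: try (rewrite ?updE /=; lia).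
  + by baseR.
  + done.
  + done.
  + exact: (up_noemit_trans (x := x.+1) (mm := mm)).
  + move=> y Hy; case: (eqVneq y x.+1) => [->//|Hne].
    have := Hmm1 y; lia.
  + case: Hmm2 => [->|[y Hy E]]; [by left | right; exists y => //; lia].
Qed.


Lemma down_loop j K : 1 <= j <= n ->
  (forall R M m, BaseR R -> R 3 = j -> R 4 = wat w j -> R 7 = m -> R 8 = base + 1 + 3 * m ->
     MemIn M -> MemLast M j -> OutInv M m (Ddown j sigma.+1) -> m <= j * sigma.+1 ->
     Runs prog B K (Cfg 59 R M) Q) ->
  forall d x R M m mm, x + d = sigma.+1 -> BaseR R -> R 3 = j -> R 4 = wat w j -> R 5 = x ->
     R 6 = mm -> R 7 = m -> R 8 = base + 1 + 3 * m -> wat w j < x -> MemIn M -> MemLast M j ->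
     OutInv M m (Ddown j x) ->
     (forall y, wat w j <= y < x -> Pw w j.-1 y <= mm) ->
     (mm = 0 \/ exists2 y, wat w j <= y < x & Pw w j.-1 y = mm) ->
     m + 1 <= j.-1 * sigma.+1 + x ->
     Runs prog B (d * 20 + K.+1) (Cfg 43 R M) Q.
Proof.
move=> Hj Hc; elim=> [|d IH] x R M m mm Hxd BR r3 r4 r5 r6 r7 r8 Hx HMI HML HO Hmm1 Hmm2 Hm;
  case: (BR) => r0 r1 r2 r9 [r12 r13 r15].
  rewrite mul0n add0n; st; rewrite ifT; last lia.
  rewrite addn0 in Hxd.
  apply: (Hc _ _ m) => //.
  - by rewrite -Hxd.
  - have Ej : j = j.-1.+1 by lia.
    rewrite [in j * _]Ej mulSn; lia.
have Hwj := wat_bnd Hj.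
have Hsn := sig_le_n.
have HmB : base + 4 + 3 * m <= B.
  apply: mB; have : j.-1 * sigma.+1 <= n.-1 * sigma.+1 by apply: leq_mul => //; lia.
  nia.
have Hmmn : mm <= n.
  case: Hmm2 => [->//|[y _ <-]]; have := Pw_le w j.-1 y; lia.
have Hpw := Pw_le w j.-1 x.
rewrite (_ : d.+1 * 20 + K.+1 = 14 + (6 + (d * 20 + K.+1))); last lia.
st; rewrite ifF; last (apply/negbTE; rewrite -leqNgt; lia).
st; bnd. st; rewrite HML; last lia. bnd.
st; case: ltnP => Hlt.
-
  st. st; bnd. st. st; bnd. st. st; bnd. st; bnd. st; bnd. st; bnd. st.
  apply: runs_mono; last apply: (IH x.+1 _ _ m.+1 (Pw w j.-1 x)).
  all: try (rewrite ?updE /=; lia).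
  + by baseR.
  + do 3 (apply: MemIn_upd; last lia); done.
  + do 3 (apply: MemLast_upd; last lia); done.
  + apply: down_emit_trans.
    apply: (OutInv_emit (l := Down)) => //; try lia.
    apply: (down_edge (mm := mm)) => //; lia.
  + move=> y Hy; case: (eqVneq y x) => [->//|Hne].
    have := Hmm1 y; lia.
  + by right; exists x => //; lia.
-
  st; bnd. st.
  apply: runs_mono; last apply: (IH x.+1 _ _ m mm).
  all: try (rewrite ?updE /=; lia).
  + by baseR.
  + done.
  + done.
  + exact: (down_noemit_trans (mm := mm)).
  + move=> y Hy; case: (eqVneq y x) => [->//|Hne].
    have := Hmm1 y; lia.
  + case: Hmm2 => [->|[y Hy E]]; [by left | right; exists y => //; lia].
Qed.


Lemma load_w M j : MemIn M -> 1 <= j <= n -> M (j + 1) = wat w j.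
Proof.
move=> H Hj; rewrite H; last lia.
rewrite /init_mem /init_cfg /= /wat.
case: eqP => [?|_]; first lia. case: eqP => [?|_]; first lia.
rewrite ifT; last lia. congr nth; lia.
Qed.

Lemma outer : forall d j R M m, j + d = n.+1 -> 1 <= j -> BaseR R -> R 3 = j -> R 7 = m ->
  R 8 = base + 1 + 3 * m -> MemIn M -> MemLast M j -> OutInv M m (fun _ b _ => b < j) ->
  m <= j.-1 * sigma.+1 ->
  Runs prog B (d * (50 + 20 * sigma) + 3) (Cfg 9 R M) Q.
Proof.
elim=> [|d IH] j R M m Hjd Hj1 BR r3 r7 r8 HMI HML HO Hm;
  case: (BR) => r0 r1 r2 r9 [r12 r13 r15].
  rewrite mul0n add0n; st; rewrite ifT; last lia.
  apply: (end_ok (m := m)) => //; rewrite addn0 in Hjd; by rewrite -Hjd.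
have Hj : 1 <= j <= n by lia.
have Hwj := wat_bnd Hj.
have Hsn := sig_le_n.
have HmB : base + 4 + 3 * m <= B.
  apply: mB; have : j.-1 * sigma.+1 <= n.-1 * sigma.+1 by apply: leq_mul => //; lia.
  nia.
have Hpw := Pw_le w j.-1 (wat w j).
set C := 50 + 20 * sigma.
set X := d * C.
set Kd := 4 + (X + 3).
set Ku := 3 + ((sigma - wat w j) * 20 + Kd.+1).
apply: (runs_mono (t := 15 + ((wat w j).-1 * 20 + Ku.+1))).
  rewrite mulSn -/X /Ku /Kd /C; lia.
st; rewrite ifF; last (apply/negbTE; rewrite -leqNgt; lia).
st; bnd. st; rewrite load_w //; bnd. st; bnd.
st; rewrite HML; last lia. bnd.
have Hcu : forall R M m, BaseR R -> R 3 = j -> R 4 = wat w j -> R 7 = m -> R 8 = base + 1 + 3 * m ->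
     MemIn M -> MemLast M j -> OutInv M m (Dup j 0) -> m <= j.-1 * sigma.+1 + wat w j ->
     Runs prog B Ku (Cfg 40 R M) Q.
  move=> R1 M1 m1 BR1 r3' r4' r7' r8' HMI1 HML1 HO1 Hm1; case: (BR1) => r0' r1' r2' r9' [r12' r13' r15'].
  have HmB1 : base + 4 + 3 * m1 <= B.
    apply: mB; have : j.-1 * sigma.+1 <= n.-1 * sigma.+1 by apply: leq_mul => //; lia.
    nia.
  rewrite /Ku.
  st; bnd. st; rewrite HML1; last lia. bnd. st; bnd.
  apply: runs_mono; last apply: (down_loop (j := j) (K := Kd) _ _ (d := sigma - wat w j) (x := (wat w j).+1)
     (m := m1) (mm := Pw w j.-1 (wat w j))) => //.
  all: try (rewrite ?updE /=; lia).
  - move=> R2 M2 m2 BR2 r3'' r4'' r7'' r8'' HMI2 HML2 HO2 Hm2; case: (BR2) => r0'' r1'' r2'' r9'' [r12'' r13'' r15''].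
    rewrite /Kd.
    st; bnd. st. st; bnd. st.
    apply: (IH j.+1 _ _ m2) => //.
    all: try (rewrite ?updE /=; lia).
    + by apply: MemIn_upd => //; lia.
    + exact: MemLast_next.
    + apply: down_end; apply: OutInv_upd => //; lia.
  - apply: up_to_down => //.
  - move=> y Hy; have -> : y = wat w j by lia. done.
  - right; exists (wat w j) => //; lia.
st; case: eqP => Hz.
-
  st; bnd. st; bnd.
  apply: runs_mono; last apply: (up_loop (j := j) (K := Ku) _ _ (x := (wat w j).-1) (m := m)
     (mm := Pw w j.-1 (wat w j))) => //.
  all: try (rewrite ?updE /=; lia).
  + exact: right_none.
  + move=> y Hy; have -> : y = wat w j by lia. done.
-
  st. st; bnd. st. st; bnd. st. st; bnd. st; bnd. st; bnd. st; bnd.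
  apply: runs_mono; last apply: (up_loop (j := j) (K := Ku) _ _ (x := (wat w j).-1) (m := m.+1)
     (mm := Pw w j.-1 (wat w j))) => //.
  all: try (rewrite ?updE /=; lia).
  + do 3 (apply: MemIn_upd; last lia); done.
  + do 3 (apply: MemLast_upd; last lia); done.
  + apply: right_after.
    apply: (OutInv_emit (l := Right)) => //; try lia.
    apply: right_edge => //; lia.
  + move=> y Hy; have -> : y = wat w j by lia. done.
  + right; exists (wat w j) => //; lia.
Qed.


Lemma init_ok : Runs prog B (9 + (n * (50 + 20 * sigma) + 3)) (init_cfg w sigma) Q.
Proof.
have Hsn := sig_le_n.
have HB0 : base + 4 <= B by have := mB (m := 0); lia.
rewrite /init_cfg.
st; bnd. st; bnd. st; bnd. st; bnd. st; bnd. st; bnd. st; bnd. st; bnd. st; bnd.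
apply: (outer (j := 1) (m := 0)) => //.
all: try (rewrite ?updE /=; lia).
- by rewrite /BaseR !updE /=; split; [lia|lia|lia|lia|split; lia].
- move=> x Hx /=; rewrite Pw0.
  case: eqP => [?|_]; first lia. case: eqP => [?|_]; first lia.
  by rewrite ifF //; apply/negbTE; rewrite -leqNgt; lia.
- split => [k //|i j l [H1 H2 _ _] Hj]; lia.
Qed.

End Main.

Theorem lemma17 :
  exists (P : seq instr) (k c : nat),
  forall (sigma : nat) (w : seq nat),
    (forall x, x \in w -> 1 <= x <= sigma) ->
    (forall x, 1 <= x <= sigma -> x \in w) ->
    exists cfg,
      run P ((size w).+2 ^ k) (c * (size w * sigma) + c) (init_cfg w sigma)
        = Some cfg /\ outputs_NEG w cfg.
Proof.
exists prog, 4, 100 => sigma w Hw1 Hw2.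
have HB : 4 * (size w + 2) * (size w + 2) <= (size w).+2 ^ 4.
  rewrite (_ : (size w).+2 ^ 4 = ((size w).+2 * (size w).+2) * ((size w).+2 * (size w).+2)); last first.
    by rewrite 3!expnS expn1 !mulnA.
  rewrite addn2; have : 2 <= (size w).+2 by []; move: (size w).+2 => a Ha.
  have : 4 <= a * a by nia. nia.
have H := init_ok Hw1 Hw2 HB.
apply: H.
have Hs : size w = 0 \/ 1 <= sigma.
  case E: w => [|a s]; [by left | right].
  by have := Hw1 a; rewrite E mem_head => /(_ isT); lia.
case: Hs => [->|Hs]; first lia.
nia.
Qed.
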